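(* Let $G$ be an $A$-AW graph with a pendant vertex, and let $t\in T_{V(G)}^{A(G)}(1)$. Then $\overline{G}$ is $N$-AW if and only if $\gcd(1+t,\ell)=1$.
   Context: All graphs are finite and simple; $\overline{G}$ is the complement. Fix an integer $\ell\ge2$; labelings are maps $V(G)\to\mathbb{Z}_\ell$. In the neighborhood Lights Out game, toggling a vertex $w$ adds $1$ (mod $\ell$) to the label of each vertex of the closed neighborhood $N[w]$; in the adjacency Lights Out game, toggling $w$ adds $1$ to the label of each vertex of the open neighborhood $N(w)$. A game is won when all labels are $0$. A graph is $N$-AW (resp. $A$-AW) if every labeling is winnable in the neighborhood (resp. adjacency) game. For $U\subseteq V(G)$ and $r\in\mathbb{Z}_\ell$, $T_U^{A(G)}(r)\subseteq\mathbb{Z}_\ell$ is the set of all $t$ such that the adjacency game on $G$ starting from the labeling that is $r$ on $U$ and $0$ elsewhere can be won with the vertices of $U$ toggled a total of $t$ times (mod $\ell$). The gcd of an element of $\mathbb{Z}_\ell$ with $\ell$ is computed using any integer representative. *)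

(* Defs.v *)
From mathcomp Require Import all_boot all_order all_algebra.
Set Implicit Arguments. Unset Strict Implicit. Unset Printing Implicit Defensive.
Import GRing.Theory.
Local Open Scope ring_scope.

Definition simple_graph (V : finType) (e : rel V) : Prop :=
  symmetric e /\ irreflexive e.

Definition compl_graph (V : finType) (e : rel V) : rel V :=
  fun x y => (x != y) && ~~ e x y.

Definition pendant (V : finType) (e : rel V) (v : V) : Prop :=
  #|[set w | e v w]| = 1%N.

(* Neighborhood game: toggling w adds 1 to each vertex of N[w].
   Toggle vector x wins from labeling b iff for every v,
   b v + sum of x w over w with v in N[w] = 0. *)
Definition N_wins (l : nat) (V : finType) (e : rel V) (b x : V -> 'Z_l) : Prop :=
  forall v : V, b v + \sum_(w : V | (w == v) || e w v) x w = 0.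

(* Adjacency game: toggling w adds 1 to each vertex of N(w). *)
Definition A_wins (l : nat) (V : finType) (e : rel V) (b x : V -> 'Z_l) : Prop :=
  forall v : V, b v + \sum_(w : V | e w v) x w = 0.

Definition N_AW (l : nat) (V : finType) (e : rel V) : Prop :=
  forall b : V -> 'Z_l, exists x : V -> 'Z_l, N_wins e b x.

Definition A_AW (l : nat) (V : finType) (e : rel V) : Prop :=
  forall b : V -> 'Z_l, exists x : V -> 'Z_l, A_wins e b x.

(* T_U^{A(G)}(r): totals t (mod l) of toggles on U over winning toggle vectors
   for the adjacency game starting from the labeling r on U, 0 elsewhere. *)
Definition T_A (l : nat) (V : finType) (e : rel V) (U : {set V}) (r t : 'Z_l) : Prop :=
  exists x : V -> 'Z_l,
    A_wins e (fun v => if v \in U then r else 0) x /\ \sum_(u in U) x u = t.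

(* Main.v *)
Require Import Defs.
From mathcomp Require Import all_boot all_order all_algebra.
From mathcomp Require Import ring.
Local Open Scope ring_scope.
Import GRing.Theory.

Lemma sym_swap (l : nat) (V : finType) (e : rel V) (he : symmetric e)
  (x y : V -> 'Z_l) :
  \sum_v x v * (\sum_(w | e w v) y w) = \sum_w y w * (\sum_(v | e v w) x v).
Proof.
under eq_bigr => v _ do rewrite big_distrr big_mkcond /=.
rewrite exchange_big /=.
apply eq_bigr => w _; rewrite big_distrr big_mkcond /=.
rewrite [RHS]big_mkcond; apply: eq_bigr => v _ /=; rewrite (he v w); case: (e w v) => //.
by rewrite mulrC.
Qed.

Lemma compl_sum (l : nat) (V : finType) (e : rel V) (hi : irreflexive e)
  (y : V -> 'Z_l) (v : V) :
  \sum_(w | (w == v) || compl_graph e w v) y w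
  = \sum_w y w - \sum_(w | e w v) y w.
Proof.
rewrite [in RHS](bigID (fun w => e w v)) /= addrAC subrr add0r.
apply: eq_bigl => w; rewrite /compl_graph.
case: (eqVneq w v) => [->|] /=; first by rewrite hi.
by [].
Qed.

Lemma unit_gcd (l : nat) (hl : (1 < l)%N) (u : 'Z_l) :
  (u \is a GRing.unit) = (gcdn (nat_of_ord u) l == 1%N).
Proof.
rewrite -{1}(natr_Zp u) unitZpE //.
by rewrite /coprime gcdnC.
Qed.

Theorem corollary3p7 (l : nat) (hl : (1 < l)%N) (V : finType) (e : rel V)
  (hG : simple_graph e) (hA : A_AW l e)
  (hpend : exists v : V, pendant e v)
  (t : 'Z_l) (ht : T_A e [set: V] 1 t) :
  N_AW l (compl_graph e) <-> gcdn (nat_of_ord (1 + t)) l = 1%N.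
Proof.
case: hG => hs hi.
case: ht => x [hx hxt].
have Ax : forall v, \sum_(w | e w v) x w = -1.
  move=> v; move: (hx v); rewrite in_setT => /eqP.
  by rewrite addrC addr_eq0 => /eqP.
have sxt : \sum_w x w = t by rewrite -hxt; apply: eq_bigl => w; rewrite in_setT.
split.
- move=> HN; apply/eqP; rewrite -unit_gcd //.
  case: hpend => u _.
  case: (HN (fun v => if e u v then 1 else 0)) => y hy.
  set s := \sum_w y w.
  have Ay : forall v, \sum_(w | e w v) y w = (if e u v then 1 else 0) + s.
    move=> v; move: (hy v); rewrite compl_sum // => /eqP.
    rewrite addrA subr_eq0 => /eqP ->; by [].
  have L : \sum_v x v * (\sum_(w | e w v) y w)
      = \sum_v x v * (if e u v then 1 else 0) + s * t.
    rewrite -sxt mulr_sumr -big_split; apply: eq_bigr => v _ /=.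
    by rewrite Ay mulrDr [s * _]mulrC.
  have R : \sum_w y w * (\sum_(v | e v w) x v) = - s.
    under eq_bigr => w _ do rewrite Ax mulrN1.
    by rewrite sumrN.
  have B : \sum_v x v * (if e u v then 1 else 0) = -1.
    rewrite -(Ax u) [RHS]big_mkcond; apply: eq_bigr => v _ /=.
    by rewrite (hs v u); case: (e u v); rewrite ?mulr1 ?mulr0.
  have h := @sym_swap _ _ _ hs x y.
  rewrite L R B in h.
  apply/unitrP; exists s.
  have E : s * (1 + t) = 1.
    rewrite mulrDr mulr1.
    have -> : s * t = (-1 + s * t) + 1 by rewrite addrC addNKr.
    by rewrite h addNKr.
  by split; rewrite // mulrC.
- move=> /eqP; rewrite -unit_gcd // => hu b.
  case: (hA (fun v => - b v)) => z hz.
  have Az : forall v, \sum_(w | e w v) z w = b v.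
    move=> v; move: (hz v) => /eqP; rewrite addrC subr_eq0 => /eqP //.
  set s := (\sum_w z w) / (1 + t).
  exists (fun w => z w - s * x w) => v.
  rewrite compl_sum // sumrB -mulr_sumr sxt sumrB -mulr_sumr Az Ax.
  have : s * (1 + t) = \sum_w z w by rewrite /s divrK.
  rewrite mulrDr mulr1 => <-.
  rewrite mulrN1; ring.
Qed.
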